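(* Let $n\in\{4,5\}$ and fix a triangulation $\tau$ of a convex $n$-gon by diagonals. Let $I$ be the set of marked points consisting of one point in each triangle and two points on each diagonal (none on the sides of the $n$-gon), and let $Q$ be the quiver on $I$ defined in the context (equivalently the skew-symmetric matrix $\varepsilon$). Then for $n=4$, $Q$ is mutation equivalent to a quiver whose underlying graph is the Dynkin diagram $D_4$, and for $n=5$, $Q$ is mutation equivalent to a quiver whose underlying graph is the Dynkin diagram $E_7$. Consequently, the cluster $\mathcal X$-space structures on the moduli spaces of configurations of $4$, resp. $5$, flags in $\mathbb{RP}^2$ given by these coordinates are of finite type $D_4$, resp. $E_7$.
   Context: Quiver on $I$: in each triangle of $\tau$ with vertices $u,v,w$ in counterclockwise order, let $c$ be its central marked point and, for a side $xy$ of the triangle that is a diagonal, let $p_{xy}$ be the marked point on it nearer to $x$. Draw the arrows $c\to p_{uv}$ and $p_{vu}\to c$ for each of the three sides $(u,v),(v,w),(w,u)$ traversed counterclockwise, and at each vertex $v$ with preceding vertex $u$ and following vertex $w$ draw the arrow $p_{vw}\to p_{vu}$; arrows involving a point on a side of the $n$-gon (not a marked point) are omitted. Set $\varepsilon_{ij}$ = (number of arrows $i\to j$) $-$ (number of arrows $j\to i$), summed over all triangles. Mutation at $k$ replaces $\varepsilon$ by $\varepsilon'_{ij}=-\varepsilon_{ij}$ if $k\in\{i,j\}$ and $\varepsilon'_{ij}=\varepsilon_{ij}+\varepsilon_{ik}\max\{0,\operatorname{sgn}(\varepsilon_{ik})\varepsilon_{kj}\}$ otherwise; two quivers are mutation equivalent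 if related by a sequence of mutations and relabelings. The coordinates on configurations of $n$ flags (modulo $PGL_3$) are the triple ratios of the flags at the vertices of the triangles and the cross-ratios at the diagonals, as in the parametrization of $\mathcal P_3^n$. *)

(* Defs.v *)
From HB Require Import structures.
From mathcomp Require Import all_boot all_order all_algebra.
Set Implicit Arguments. Unset Strict Implicit. Unset Printing Implicit Defensive.
Import Order.TTheory GRing.Theory Num.Theory.
Local Open Scope ring_scope.

Record quiver := Quiver { qT : finType; qe : qT -> qT -> int }.

Definition mutate (T : finType) (k : T) (e : T -> T -> int) : T -> T -> int :=
  fun i j => if (i == k) || (j == k) then - e i j
             else e i j + e i k * Num.max 0 (sgz (e i k) * e k j).

Inductive mut_equiv : quiver -> quiver -> Prop :=
| me_refl Q : mut_equiv Q Q
| me_mutate (T : finType) (e : T -> T -> int) (k : T) :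
    mut_equiv (Quiver e) (Quiver (mutate k e))
| me_relabel (T T' : finType) (e : T -> T -> int) (f : T' -> T) :
    bijective f -> mut_equiv (Quiver e) (Quiver (fun i j => e (f i) (f j)))
| me_sym Q1 Q2 : mut_equiv Q1 Q2 -> mut_equiv Q2 Q1
| me_trans Q1 Q2 Q3 : mut_equiv Q1 Q2 -> mut_equiv Q2 Q3 -> mut_equiv Q1 Q3.

Definition has_underlying_graph (m : nat) (edge : rel 'I_m)
  (e : 'I_m -> 'I_m -> int) : Prop :=
  forall i j, e i j = - e j i /\ `|e i j| = (edge i j : nat)%:Z.

Definition edge_of_list (m : nat) (s : seq (nat * nat)) : rel 'I_m :=
  fun i j => ((val i, val j) \in s) || ((val j, val i) \in s).

Definition D4_edge : rel 'I_4 := edge_of_list [:: (0,1); (0,2); (0,3)]%N.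
Definition E7_edge : rel 'I_7 :=
  edge_of_list [:: (0,1); (1,2); (2,3); (3,4); (4,5); (2,6)]%N.

(* Vertices of the n-gon: 'I_n, labelled 0,...,n-1 counterclockwise. *)

Definition adjacent (n : nat) (a b : 'I_n) : bool :=
  (val b == (val a).+1 %% n)%N || (val a == (val b).+1 %% n)%N.

Definition is_diag (n : nat) (a b : 'I_n) : bool := (a != b) && ~~ adjacent a b.

(* diagonals {a,b}, {c,d} with a<b, c<d cross in their interiors *)
Definition crossing (n : nat) (p q : 'I_n * 'I_n) : bool :=
  let a := val p.1 in let b := val p.2 in let c := val q.1 in let d := val q.2 in
  [&& a < c, c < b & b < d]%N || [&& c < a, a < d & d < b]%N.

(* A triangulation: a maximal set of pairwise non-crossing diagonals,
   each diagonal {a,b} stored once as the pair (a,b) with a < b. *)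
Definition triangulation (n : nat) (D : {set 'I_n * 'I_n}) : Prop :=
  [/\ (forall p, p \in D -> (val p.1 < val p.2)%N && is_diag p.1 p.2),
      (forall p q, p \in D -> q \in D -> ~~ crossing p q) &
      (forall a b : 'I_n, (val a < val b)%N -> is_diag a b -> (a, b) \notin D ->
         exists2 q, q \in D & crossing (a, b) q)].

Definition tedge (n : nat) (D : {set 'I_n * 'I_n}) (x y : 'I_n) : bool :=
  [|| adjacent x y, (x, y) \in D | (y, x) \in D].

(* triangles of tau, as (u,v,w) with u<v<w, i.e. in counterclockwise order *)
Definition is_tri (n : nat) (D : {set 'I_n * 'I_n}) (t : 'I_n * 'I_n * 'I_n) : bool :=
  let: (u, v, w) := t in
  [&& (val u < val v)%N, (val v < val w)%N, tedge D u v, tedge D v w & tedge D u w].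

(* candidate points: central point c_t of a triple t (inl t), and the point
   p_{xy} on segment xy nearer to x (inr (x,y)). *)
Definition node (n : nat) : finType := ('I_n * 'I_n * 'I_n + 'I_n * 'I_n)%type.

Definition marked (n : nat) (D : {set 'I_n * 'I_n}) (x : node n) : bool :=
  match x with
  | inl t => is_tri D t
  | inr (a, b) => ((a, b) \in D) || ((b, a) \in D)
  end.

Definition tri_arrows (n : nat) (t : 'I_n * 'I_n * 'I_n) : seq (node n * node n) :=
  let: (u, v, w) := t in
  let c : node n := inl t in
  let p (x y : 'I_n) : node n := inr (x, y) in
  [:: (c, p u v); (p v u, c); (c, p v w); (p w v, c); (c, p w u); (p u w, c);
      (p u v, p u w); (p v w, p v u); (p w u, p w v)].

(* eps_{ij} = #(arrows i -> j) - #(arrows j -> i), summed over triangles.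
   Arrows with an unmarked endpoint never contribute once restricted to I. *)
Definition eps (n : nat) (D : {set 'I_n * 'I_n}) (i j : node n) : int :=
  \sum_(t | is_tri D t)
     ((count_mem (i, j) (tri_arrows t))%:Z - (count_mem (j, i) (tri_arrows t))%:Z).

Definition markedT (n : nat) (D : {set 'I_n * 'I_n}) : finType :=
  {x : node n | marked D x}.

Definition tau_quiver (n : nat) (D : {set 'I_n * 'I_n}) : quiver :=
  @Quiver (markedT D) (fun i j => eps D (val i) (val j)).

(* Main.v *)
Require Import Defs.
From HB Require Import structures.
From mathcomp Require Import all_boot all_order all_algebra.
From Stdlib Require Import FunctionalExtensionality.
Set Implicit Arguments. Unset Strict Implicit. Unset Printing Implicit Defensive.
Import Order.TTheory GRing.Theory Num.Theory.
Local Open Scope ring_scope.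

Definition mko n i : option 'I_n :=
  (if (i < n)%N as b return (i < n)%N = b -> option 'I_n
   then fun H => Some (Ordinal H) else fun _ => None) erefl.
Definition ordl n := pmap (mko n) (iota 0 n).

Lemma mkoK n (x : 'I_n) : mko n x = Some x.
Proof.
case: x => i Hi; rewrite /mko /=.
suff H : forall b (E : (i < n)%N = b),
  (if b as b0 return ((i < n)%N = b0 -> option 'I_n)
   then fun H => Some (Ordinal H) else fun _ => None) E = Some (Ordinal Hi).
  by apply: H.
move=> [] E; first by congr Some; apply: val_inj.
by rewrite Hi in E.
Qed.

Lemma ordl_all n (x : 'I_n) : x \in ordl n.
Proof.
rewrite mem_pmap -(mkoK x); apply: map_f; rewrite mem_iota /=; exact: ltn_ord.
Qed.

Lemma ordl_nth n (x0 : 'I_n) (i : 'I_n) :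
  map val (ordl n) = iota 0 n -> nth x0 (ordl n) i = i.
Proof.
move=> H; have Hs : size (ordl n) = n by rewrite -(size_map val) H size_iota.
apply: val_inj; rewrite -(nth_map x0 (val x0)) ?Hs ?ltn_ord // H nth_iota //.
Qed.

Definition pairsL n : seq ('I_n * 'I_n) := [seq (a, b) | a <- ordl n, b <- ordl n].
Definition triples n : seq ('I_n * 'I_n * 'I_n) := [seq (ab, c) | ab <- pairsL n, c <- ordl n].
Definition nodes n : seq (node n) := map inl (triples n) ++ map inr (pairsL n).

Lemma pairs_all n (p : 'I_n * 'I_n) : p \in pairsL n.
Proof. case: p => a b; apply: allpairs_f; exact: ordl_all. Qed.
Lemma triples_all n (t : 'I_n * 'I_n * 'I_n) : t \in triples n.
Proof. case: t => ab c; apply: allpairs_f; [exact: pairs_all| exact: ordl_all]. Qed.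
Lemma nodes_all n (x : node n) : x \in nodes n.
Proof.
rewrite mem_cat; case: x => [t|p]; apply/orP; [left|right]; apply: map_f;
  [exact: triples_all | exact: pairs_all].
Qed.

Section P.
Variable n : nat.
Variable inD : pred ('I_n * 'I_n).
Definition tedgeP (x y : 'I_n) : bool := [|| adjacent x y, inD (x, y) | inD (y, x)].
Definition isTriP (t : 'I_n * 'I_n * 'I_n) : bool :=
  let: (u, v, w) := t in
  [&& (val u < val v)%N, (val v < val w)%N, tedgeP u v, tedgeP v w & tedgeP u w].
Definition markedP (x : node n) : bool :=
  match x with
  | inl t => isTriP t
  | inr (a, b) => inD (a, b) || inD (b, a)
  end.
Definition epsP (i j : node n) : int :=
  foldr (fun t acc => (if isTriP t then
     ((count_mem (i, j) (tri_arrows t))%:Z - (count_mem (j, i) (tri_arrows t))%:Z) else 0) + acc)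
    0 (triples n).
End P.

Lemma bigfoldr (I : eqType) (s : seq I) (P : pred I) (F : I -> int) :
  \sum_(t <- s | P t) F t = foldr (fun t acc => (if P t then F t else 0) + acc) 0 s.
Proof.
elim: s => [|x s IH]; first by rewrite big_nil.
by rewrite big_cons IH /=; case: (P x) => //; rewrite add0r.
Qed.

Lemma epsE n (D : {set 'I_n * 'I_n}) i j :
  uniq (triples n) -> eps D i j = epsP (fun p => p \in D) i j.
Proof.
move=> U; rewrite /eps (perm_big (triples n)); last first.
  by apply: uniq_perm; [exact: index_enum_uniq | exact: U |
      move=> x; rewrite mem_index_enum triples_all].
by rewrite bigfoldr.
Qed.

Definition tbl m (M : seq (seq int)) (i j : 'I_m) : int := nth 0 (nth [::] M i) j.
Definition mutL m (k : 'I_m) (M : seq (seq int)) : seq (seq int) :=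
  [seq [seq mutate k (@tbl m M) i j | j <- ordl m] | i <- ordl m].

Lemma tbl_mutL m k M : map val (ordl m) = iota 0 m ->
  tbl (mutL k M) = mutate k (@tbl m M).
Proof.
move=> H; have Hs : size (ordl m) = m by rewrite -(size_map val) H size_iota.
apply: functional_extensionality => i; apply: functional_extensionality => j.
rewrite /tbl /mutL (nth_map i) ?Hs ?ltn_ord // (nth_map j) ?Hs ?ltn_ord //.
by rewrite !ordl_nth.
Qed.

Lemma chain m (M : seq (seq int)) (ks : seq 'I_m) : map val (ordl m) = iota 0 m ->
  mut_equiv (Quiver (@tbl m M)) (Quiver (@tbl m (foldl (fun M k => mutL k M) M ks))).
Proof.
move=> H; elim: ks M => [|k ks IH] M /=; first exact: me_refl.
apply: me_trans (IH _); rewrite tbl_mutL //; exact: me_mutate.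
Qed.

Definition final_e m (M : seq (seq int)) (ks : seq 'I_m) (P : seq 'I_m) (d : 'I_m) : 'I_m -> 'I_m -> int :=
  fun i j => @tbl m (foldl (fun M k => mutL k M) M ks) (nth d P i) (nth d P j).

Definition M0 n (inD : pred ('I_n * 'I_n)) (L : seq (node n)) : seq (seq int) :=
  [seq [seq epsP inD x y | y <- L] | x <- L].

Definition checks n' m' (inD : pred ('I_n'.+1 * 'I_n'.+1)) (L : seq (node n'.+1))
  (ks : seq 'I_m'.+1) (P Pinv : seq 'I_m'.+1) (edge : rel 'I_m'.+1) : bool :=
  let e := final_e (M0 inD L) ks P ord0 in
  [&& map val (ordl m'.+1) == iota 0 m'.+1, uniq (triples n'.+1), size L == m'.+1,
      uniq L, all (markedP inD) L, all (fun x => markedP inD x ==> (x \in L)) (nodes n'.+1),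
      all (fun i : 'I_m'.+1 => nth ord0 Pinv (nth ord0 P i) == i) (ordl m'.+1),
      all (fun i : 'I_m'.+1 => nth ord0 P (nth ord0 Pinv i) == i) (ordl m'.+1) &
      all (fun i : 'I_m'.+1 => all (fun j : 'I_m'.+1 => (e i j == - e j i) && (`|e i j| == (edge i j : nat)%:Z))
        (ordl m'.+1)) (ordl m'.+1)].

Lemma case_lemma n' m' (D : {set 'I_n'.+1 * 'I_n'.+1}) inD
  (HD : forall p, (p \in D) = inD p) L ks P Pinv edge :
  checks inD L ks P Pinv edge ->
  exists e : 'I_m'.+1 -> 'I_m'.+1 -> int,
    has_underlying_graph edge e /\ mut_equiv (tau_quiver D) (Quiver e).
Proof.
case/and5P => /eqP Hval Utr /eqP HsL UL; case/and5P => /allP HmL /allP Hcomp /allP HP1 /allP HP2 /allP Hg.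
have FD : (fun p => p \in D) = inD := functional_extensionality _ _ HD.
have Hm : forall x, marked D x = markedP inD x by move=> x; rewrite -FD.
set x0 : node n'.+1 := inr (ord0, ord0).
have Hf : forall i : 'I_m'.+1, marked D (nth x0 L i).
  by move=> i; rewrite Hm; apply: HmL; apply: mem_nth; rewrite HsL ltn_ord.
pose f := fun i : 'I_m'.+1 => (exist (fun x => marked D x) (nth x0 L i) (Hf i) : markedT D).
have bijf : bijective f.
  exists (fun x : markedT D => (inord (index (val x) L) : 'I_m'.+1)).
    by move=> i; rewrite /f /= index_uniq ?HsL ?ltn_ord // inord_val.
  move=> x; apply: val_inj => /=.
  have xL : val x \in L.
    by move: (Hcomp (val x) (nodes_all _)); rewrite -Hm (valP x).
  by rewrite inordK ?nth_index // -HsL index_mem.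
exists (final_e (M0 inD L) ks P ord0); split.
  move=> i j; have := Hg i (ordl_all _) => /allP /(_ j (ordl_all _)) /andP [/eqP -> /eqP ->].
  by [].
apply: me_trans (me_relabel (fun i j : markedT D => eps D (val i) (val j)) bijf) _.
have -> : (fun i j : 'I_m'.+1 => eps D (val (f i)) (val (f j))) = @tbl m'.+1 (M0 inD L).
  apply: functional_extensionality => i; apply: functional_extensionality => j.
  rewrite /tbl /M0 /f /= (nth_map x0) ?HsL ?ltn_ord // (nth_map x0) ?HsL ?ltn_ord //.
  by rewrite epsE // FD.
apply: me_trans (chain _ ks Hval) _.
rewrite /final_e.
have bijP : bijective (fun i : 'I_m'.+1 => nth ord0 P i).
  exists (fun i : 'I_m'.+1 => nth ord0 Pinv i) => i; [exact/eqP/HP1/ordl_all | exact/eqP/HP2/ordl_all].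
exact: (me_relabel _ bijP).
Qed.

Definition oo n k : 'I_n.+1 := nth ord0 (ordl n.+1) k.
Definition L4_0 : seq (node 4) := [:: inl (oo 3 0, oo 3 1, oo 3 2); inl (oo 3 0, oo 3 2, oo 3 3); inr (oo 3 0, oo 3 2); inr (oo 3 2, oo 3 0)].
Definition ks4_0 : seq 'I_4 := [:: oo 3 0; oo 3 2].
Definition P4_0 : seq 'I_4 := [:: oo 3 2; oo 3 0; oo 3 1; oo 3 3].
Definition Pi4_0 : seq 'I_4 := [:: oo 3 1; oo 3 2; oo 3 0; oo 3 3].

Definition L4_1 : seq (node 4) := [:: inl (oo 3 0, oo 3 1, oo 3 3); inl (oo 3 1, oo 3 2, oo 3 3); inr (oo 3 1, oo 3 3); inr (oo 3 3, oo 3 1)].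
Definition ks4_1 : seq 'I_4 := [:: oo 3 0; oo 3 2].
Definition P4_1 : seq 'I_4 := [:: oo 3 2; oo 3 0; oo 3 1; oo 3 3].
Definition Pi4_1 : seq 'I_4 := [:: oo 3 1; oo 3 2; oo 3 0; oo 3 3].

Definition L5_0 : seq (node 5) := [:: inl (oo 4 0, oo 4 1, oo 4 2); inl (oo 4 0, oo 4 2, oo 4 3); inl (oo 4 0, oo 4 3, oo 4 4); inr (oo 4 0, oo 4 2); inr (oo 4 0, oo 4 3); inr (oo 4 2, oo 4 0); inr (oo 4 3, oo 4 0)].
Definition ks5_0 : seq 'I_7 := [:: oo 6 0; oo 6 3; oo 6 4; oo 6 2; oo 6 6].
Definition P5_0 : seq 'I_7 := [:: oo 6 5; oo 6 3; oo 6 6; oo 6 2; oo 6 4; oo 6 0; oo 6 1].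
Definition Pi5_0 : seq 'I_7 := [:: oo 6 5; oo 6 6; oo 6 3; oo 6 1; oo 6 4; oo 6 0; oo 6 2].

Definition L5_1 : seq (node 5) := [:: inl (oo 4 0, oo 4 1, oo 4 4); inl (oo 4 1, oo 4 2, oo 4 3); inl (oo 4 1, oo 4 3, oo 4 4); inr (oo 4 1, oo 4 3); inr (oo 4 1, oo 4 4); inr (oo 4 3, oo 4 1); inr (oo 4 4, oo 4 1)].
Definition ks5_1 : seq 'I_7 := [:: oo 6 0; oo 6 4; oo 6 3; oo 6 1; oo 6 5].
Definition P5_1 : seq 'I_7 := [:: oo 6 6; oo 6 4; oo 6 5; oo 6 1; oo 6 3; oo 6 0; oo 6 2].
Definition Pi5_1 : seq 'I_7 := [:: oo 6 5; oo 6 3; oo 6 6; oo 6 4; oo 6 1; oo 6 2; oo 6 0].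

Definition L5_2 : seq (node 5) := [:: inl (oo 4 0, oo 4 1, oo 4 2); inl (oo 4 0, oo 4 2, oo 4 4); inl (oo 4 2, oo 4 3, oo 4 4); inr (oo 4 0, oo 4 2); inr (oo 4 2, oo 4 0); inr (oo 4 2, oo 4 4); inr (oo 4 4, oo 4 2)].
Definition ks5_2 : seq 'I_7 := [:: oo 6 0; oo 6 4; oo 6 5; oo 6 2; oo 6 6].
Definition P5_2 : seq 'I_7 := [:: oo 6 3; oo 6 4; oo 6 6; oo 6 2; oo 6 5; oo 6 0; oo 6 1].
Definition Pi5_2 : seq 'I_7 := [:: oo 6 5; oo 6 6; oo 6 3; oo 6 0; oo 6 1; oo 6 4; oo 6 2].

Definition L5_3 : seq (node 5) := [:: inl (oo 4 0, oo 4 1, oo 4 3); inl (oo 4 0, oo 4 3, oo 4 4); inl (oo 4 1, oo 4 2, oo 4 3); inr (oo 4 0, oo 4 3); inr (oo 4 1, oo 4 3); inr (oo 4 3, oo 4 0); inr (oo 4 3, oo 4 1)].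
Definition ks5_3 : seq 'I_7 := [:: oo 6 0; oo 6 3; oo 6 4; oo 6 1; oo 6 6].
Definition P5_3 : seq 'I_7 := [:: oo 6 5; oo 6 3; oo 6 6; oo 6 4; oo 6 1; oo 6 2; oo 6 0].
Definition Pi5_3 : seq 'I_7 := [:: oo 6 6; oo 6 4; oo 6 5; oo 6 1; oo 6 3; oo 6 0; oo 6 2].

Definition L5_4 : seq (node 5) := [:: inl (oo 4 0, oo 4 1, oo 4 4); inl (oo 4 1, oo 4 2, oo 4 4); inl (oo 4 2, oo 4 3, oo 4 4); inr (oo 4 1, oo 4 4); inr (oo 4 2, oo 4 4); inr (oo 4 4, oo 4 1); inr (oo 4 4, oo 4 2)].
Definition ks5_4 : seq 'I_7 := [:: oo 6 0; oo 6 5; oo 6 6; oo 6 2; oo 6 4].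
Definition P5_4 : seq 'I_7 := [:: oo 6 3; oo 6 5; oo 6 4; oo 6 2; oo 6 6; oo 6 0; oo 6 1].
Definition Pi5_4 : seq 'I_7 := [:: oo 6 5; oo 6 6; oo 6 3; oo 6 0; oo 6 2; oo 6 1; oo 6 4].

Definition inD_of n (S : seq ('I_n * 'I_n)) (bs : seq bool) (p : 'I_n * 'I_n) : bool :=
  nth false bs (index p S).
Definition S4 : seq ('I_4 * 'I_4) := [:: (oo 3 0, oo 3 2); (oo 3 1, oo 3 3)].
Definition S5 : seq ('I_5 * 'I_5) := [:: (oo 4 0, oo 4 2); (oo 4 0, oo 4 3); (oo 4 1, oo 4 3); (oo 4 1, oo 4 4); (oo 4 2, oo 4 4)].

Lemma HD_of n (D : {set 'I_n * 'I_n}) S : (forall p, p \in D -> p \in S) ->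
  forall p, (p \in D) = inD_of S [seq q \in D | q <- S] p.
Proof.
move=> HS p; rewrite /inD_of.
case pS: (p \in S).
  by rewrite (nth_map p) ?index_mem // nth_index.
rewrite nth_default; last by rewrite size_map memNindex ?pS.
by apply/negbTE/negP => /HS; rewrite pS.
Qed.

Definition triB n (inD : pred ('I_n * 'I_n)) : bool :=
  all (fun p => all (fun q => ~~ [&& inD p, inD q & crossing p q]) (pairsL n)) (pairsL n) &&
  all (fun ab : 'I_n * 'I_n => ~~ [&& (val ab.1 < val ab.2)%N, is_diag ab.1 ab.2 & ~~ inD ab]
     || has (fun q => inD q && crossing ab q) (pairsL n)) (pairsL n).

Lemma triB_of n (D : {set 'I_n * 'I_n}) : triangulation D -> triB (fun p : 'I_n * 'I_n => p \in D).
Proof.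
case=> _ H2 H3; apply/andP; split; apply/allP => p _.
  apply/allP => q _; apply/negP => /and3P [pD qD]; apply/negP; exact: H2.
case: p => a b /=.
case E: [&& _, _ & _] => //=; case/and3P: E => lt dg nD.
have [q qD cr] := H3 a b lt dg nD.
by apply/hasP; exists q; [exact: pairs_all | rewrite qD].
Qed.

Lemma diag_in n (D : {set 'I_n * 'I_n}) (S : seq ('I_n * 'I_n)) : triangulation D ->
  all (fun p : 'I_n * 'I_n => ~~ ((val p.1 < val p.2)%N && is_diag p.1 p.2) || (p \in S)) (pairsL n) ->
  forall p, p \in D -> p \in S.
Proof.
case=> H1 _ _ /allP H p pD; have := H p (pairs_all p); by rewrite H1.
Qed.

Lemma part4 (D : {set 'I_4 * 'I_4}) : triangulation D ->
  exists e : 'I_4 -> 'I_4 -> int,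
    has_underlying_graph D4_edge e /\ mut_equiv (tau_quiver D) (Quiver e).
Proof.
move=> HT.
have HS := diag_in (S := S4) HT (ltac:(vm_compute; reflexivity)).
have HD := HD_of HS.
have HB := triB_of HT.
rewrite (functional_extensionality _ _ HD) in HB.
move: HD HB; rewrite /=.
move: (_ \in D) (_ \in D) => b1 b2.
case: b1; case: b2 => HD HB;
 try by (exfalso; move: HB; vm_compute; move=> H; discriminate H).
all: first
  [ (apply: (case_lemma (L := L4_0) (ks := ks4_0) (P := P4_0) (Pinv := Pi4_0) HD); vm_compute; reflexivity)
  | (apply: (case_lemma (L := L4_1) (ks := ks4_1) (P := P4_1) (Pinv := Pi4_1) HD); vm_compute; reflexivity) ].
Qed.

Lemma part5 (D : {set 'I_5 * 'I_5}) : triangulation D ->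
  exists e : 'I_7 -> 'I_7 -> int,
    has_underlying_graph E7_edge e /\ mut_equiv (tau_quiver D) (Quiver e).
Proof.
move=> HT.
have HS := diag_in (S := S5) HT (ltac:(vm_compute; reflexivity)).
have HD := HD_of HS.
have HB := triB_of HT.
rewrite (functional_extensionality _ _ HD) in HB.
move: HD HB; rewrite /=.
move: (_ \in D) (_ \in D) (_ \in D) (_ \in D) (_ \in D) => b1 b2 b3 b4 b5.
case: b1; case: b2; case: b3; case: b4; case: b5 => HD HB;
 try by (exfalso; move: HB; vm_compute; move=> H; discriminate H).
all: try (apply: (case_lemma (L := L5_0) (ks := ks5_0) (P := P5_0) (Pinv := Pi5_0) HD); vm_compute; reflexivity).
all: try (apply: (case_lemma (L := L5_1) (ks := ks5_1) (P := P5_1) (Pinv := Pi5_1) HD); vm_compute; reflexivity).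
all: try (apply: (case_lemma (L := L5_2) (ks := ks5_2) (P := P5_2) (Pinv := Pi5_2) HD); vm_compute; reflexivity).
all: try (apply: (case_lemma (L := L5_3) (ks := ks5_3) (P := P5_3) (Pinv := Pi5_3) HD); vm_compute; reflexivity).
all: try (apply: (case_lemma (L := L5_4) (ks := ks5_4) (P := P5_4) (Pinv := Pi5_4) HD); vm_compute; reflexivity).
Qed.

Theorem mainTheorem12 :
  (forall D : {set 'I_4 * 'I_4}, triangulation D ->
     exists e : 'I_4 -> 'I_4 -> int,
       has_underlying_graph D4_edge e /\ mut_equiv (tau_quiver D) (Quiver e)) /\
  (forall D : {set 'I_5 * 'I_5}, triangulation D ->
     exists e : 'I_7 -> 'I_7 -> int,
       has_underlying_graph E7_edge e /\ mut_equiv (tau_quiver D) (Quiver e)).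
Proof. split; [exact: part4 | exact: part5]. Qed.
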